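(* Let $S$ be a weakly cancellative $\mathrm{Cu}$-semigroup satisfying (O5) and (O6). Then $S$ satisfies (O8).
   Context: A $\mathrm{Cu}$-semigroup is a positively ordered abelian monoid $S$ such that: (O1) every increasing sequence has a supremum; (O2) every $x$ is the supremum of a $\ll$-increasing sequence; (O3) $x'\ll x$, $y'\ll y$ imply $x'+y'\ll x+y$; (O4) $\sup_n(x_n+y_n)=\sup_nx_n+\sup_ny_n$ for increasing sequences. Here $x\ll y$ means: for every increasing sequence $(y_k)$ with $y\le\sup_ky_k$ there is $k$ with $x\le y_k$. (O5): given $x+y\le z$, $x'\ll x$, $y'\ll y$, there is $c$ with $x'+c\le z\le x+c$ and $y'\ll c$. (O6): given $x'\ll x\le y+z$, there are $e,f$ with $x'\le e+f$, $e\le x,y$, $f\le x,z$. $S$ is weakly cancellative if $x+z\ll y+z$ implies $x\ll y$. (O8): for all $x',x,y',y,z,w$ with $2w=w$, $x+y\ll z+w$, $x'\ll x$, $y'\ll y$, there exist $z_1,z_2$ with $z_1+z_2\ll z$, $x'\ll z_1+w$, $y'\ll z_2+w$, $z_1\ll x+w$, $z_2\ll y+w$. *)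

(* Defs.v *)
Record PoMonoid := {
  carrier :> Type;
  add : carrier -> carrier -> carrier;
  zero : carrier;
  le : carrier -> carrier -> Prop
}.

Arguments add {_} _ _.
Arguments zero {_}.
Arguments le {_} _ _.

Section Defs.
Variable M : PoMonoid.

Definition is_po_abelian_monoid : Prop :=
  (forall x y z : M, add x (add y z) = add (add x y) z) /\
  (forall x y : M, add x y = add y x) /\
  (forall x : M, add x zero = x) /\
  (forall x : M, le x x) /\
  (forall x y z : M, le x y -> le y z -> le x z) /\
  (forall x y : M, le x y -> le y x -> x = y) /\
  (forall x y z : M, le x y -> le (add x z) (add y z)) /\
  (forall x : M, le zero x).

Definition increasing (f : nat -> M) : Prop := forall n, le (f n) (f (S n)).

Definition is_sup (f : nat -> M) (s : M) : Prop :=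
  (forall n, le (f n) s) /\ (forall u, (forall n, le (f n) u) -> le s u).

Definition way_below (x y : M) : Prop :=
  forall (g : nat -> M) (s : M), increasing g -> is_sup g s -> le y s ->
    exists k, le x (g k).

Definition O1 : Prop := forall f : nat -> M, increasing f -> exists s, is_sup f s.

Definition O2 : Prop :=
  forall x : M, exists f : nat -> M,
    (forall n, way_below (f n) (f (S n))) /\ is_sup f x.

Definition O3 : Prop :=
  forall x' x y' y : M, way_below x' x -> way_below y' y ->
    way_below (add x' y') (add x y).

Definition O4 : Prop :=
  forall (f g : nat -> M) (a b : M), increasing f -> increasing g ->
    is_sup f a -> is_sup g b -> is_sup (fun n => add (f n) (g n)) (add a b).

Definition CuSemigroup : Prop :=
  is_po_abelian_monoid /\ O1 /\ O2 /\ O3 /\ O4.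

Definition O5 : Prop :=
  forall x y z x' y' : M, le (add x y) z -> way_below x' x -> way_below y' y ->
    exists c : M, le (add x' c) z /\ le z (add x c) /\ way_below y' c.

Definition O6 : Prop :=
  forall x' x y z : M, way_below x' x -> le x (add y z) ->
    exists e f : M, le x' (add e f) /\ le e x /\ le e y /\ le f x /\ le f z.

Definition weakly_cancellative : Prop :=
  forall x y z : M, way_below (add x z) (add y z) -> way_below x y.

Definition O8 : Prop :=
  forall x' x y' y z w : M,
    add w w = w -> way_below (add x y) (add z w) ->
    way_below x' x -> way_below y' y ->
    exists z1 z2 : M,
      way_below (add z1 z2) z /\
      way_below x' (add z1 w) /\ way_below y' (add z2 w) /\
      way_below z1 (add x w) /\ way_below z2 (add y w).

End Defs.

(* Main.v *)
Require Import Defs.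

Ltac dpo H := destruct H as (Hassoc & Hcomm & Hzero & Hrefl & Htrans & Hanti & Hmon & Hpos).

Lemma le_wb (M : PoMonoid) (H : is_po_abelian_monoid M) (a b c : M) :
  le a b -> way_below M b c -> way_below M a c.
Proof. dpo H. intros Hab Hbc g s Hg Hs Hc. destruct (Hbc g s Hg Hs Hc) as [k Hk].
  exists k. eauto. Qed.

Lemma wb_le (M : PoMonoid) (H : is_po_abelian_monoid M) (a b c : M) :
  way_below M a b -> le b c -> way_below M a c.
Proof. dpo H. intros Hab Hbc g s Hg Hs Hc. apply (Hab g s Hg Hs). eauto. Qed.

Lemma wb_le_imp (M : PoMonoid) (H : is_po_abelian_monoid M) (a b : M) :
  way_below M a b -> le a b.
Proof. dpo H. intros Hab. destruct (Hab (fun _ => b) b) as [k Hk]; auto.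
  - intros n; auto.
  - split; auto. intros u Hu. apply (Hu 0).
Qed.

Lemma mon2 (M : PoMonoid) (H : is_po_abelian_monoid M) (a b c d : M) :
  le a b -> le c d -> le (add a c) (add b d).
Proof. intros h1 h2. pose proof H as H'. dpo H.
  apply Htrans with (add b c); auto.
  rewrite (Hcomm b c), (Hcomm b d); auto. Qed.

Lemma le_addr (M : PoMonoid) (H : is_po_abelian_monoid M) (a w : M) :
  le a (add a w).
Proof. pose proof H as H'. dpo H. assert (h : le (add a zero) (add a w)) by (apply mon2; auto). rewrite Hzero in h; exact h. Qed.

Lemma approx (M : PoMonoid) (H : is_po_abelian_monoid M) (h2 : O2 M) (x : M) :
  exists f : nat -> M, (forall n, way_below M (f n) x) /\ increasing M f /\ is_sup M f x.
Proof. destruct (h2 x) as [f [Hf Hs]]. exists f. split; [|split]; auto.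
  - intros n. apply wb_le with (f (S n)); auto. apply (proj1 Hs).
  - intros n. apply wb_le_imp; auto. Qed.

Lemma interp (M : PoMonoid) (H : is_po_abelian_monoid M) (h2 : O2 M) (a b : M) :
  way_below M a b -> exists c, way_below M a c /\ way_below M c b.
Proof. intros Hab. pose proof H as H'. dpo H. destruct (h2 b) as [f [Hf Hs]].
  assert (Hi : increasing M f) by (intros n; apply wb_le_imp; auto).
  destruct (Hab f b Hi Hs (Hrefl b)) as [k Hk].
  exists (f (S k)). split.
  - apply le_wb with (f k); auto.
  - apply wb_le with (f (S (S k))); auto. apply (proj1 Hs). Qed.

Lemma sup_const (M : PoMonoid) (H : is_po_abelian_monoid M) (h4 : O4 M) (f : nat -> M) (s w : M) :
  increasing M f -> is_sup M f s -> increasing M (fun n => add (f n) w) /\ is_sup M (fun n => add (f n) w) (add s w).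
Proof. intros Hi Hs. pose proof H as H'. dpo H. split.
  - intros n. apply Hmon. apply Hi.
  - apply (h4 f (fun _ => w)); auto. intros n; auto. split; auto. intros u Hu; apply (Hu 0). Qed.

Lemma wb_split (M : PoMonoid) (H : is_po_abelian_monoid M) (h2 : O2 M) (h4 : O4 M) (a z w : M) :
  way_below M a (add z w) -> exists z', way_below M z' z /\ le a (add z' w).
Proof. intros Ha. pose proof H as H'. dpo H. destruct (approx M H' h2 z) as [f [Hf [Hi Hs]]].
  destruct (sup_const M H' h4 f z w Hi Hs) as [Hi2 Hs2].
  destruct (Ha _ _ Hi2 Hs2 (Hrefl _)) as [k Hk]. exists (f k); auto. Qed.

Lemma wc_lemma (M : PoMonoid) (H : is_po_abelian_monoid M) (h2 : O2 M) (h3 : O3 M)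
  (wc : weakly_cancellative M) (y x t x3 : M) :
  le (add y x) (add t x3) -> way_below M x3 x -> le y t.
Proof. intros Hle Hx. pose proof H as H'. dpo H. destruct (approx M H' h2 y) as [f [Hf [Hi Hs]]].
  apply (proj2 Hs). intros n. apply wb_le_imp; auto. apply (wc (f n) t x3).
  apply wb_le with (add y x); auto. Qed.

Lemma wb00 (M : PoMonoid) (H : is_po_abelian_monoid M) : way_below M zero zero.
Proof. dpo H. intros g s _ _ _. exists 0. auto. Qed.

Theorem mainTheorem15 (S : PoMonoid) :
  CuSemigroup S -> weakly_cancellative S -> O5 S -> O6 S -> O8 S.
Proof.
  intros [H [h1 [h2 [h3 h4]]]] wc h5 h6.
  intros x' x y' y z w Hw Hxy Hx' Hy'.
  pose proof H as H'. dpo H.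
  destruct (wb_split S H' h2 h4 _ _ _ Hxy) as [z' [Hz' Hle]].
  destruct (interp S H' h2 _ _ Hx') as [x1 [Hx1a Hx1b]].
  destruct (interp S H' h2 _ _ Hx1b) as [x2 [Hx2a Hx2b]].
  destruct (interp S H' h2 _ _ Hx2b) as [x3 [Hx3a Hx3b]].
  destruct (interp S H' h2 _ _ Hy') as [y1 [Hy1a Hy1b]].
  destruct (interp S H' h2 _ _ Hy1b) as [y2 [Hy2a Hy2b]].
  assert (Hx3le : le x3 (add z' w)).
  { apply Htrans with x. apply (wb_le_imp S H'); auto.
    apply Htrans with (add x y); auto. apply le_addr; auto. }
  destruct (h6 _ _ _ _ Hx3a Hx3le) as (e1 & f1 & He1a & He1b & He1c & Hf1a & Hf1b).
  assert (Hx2e : le x2 (add e1 w)).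
  { apply Htrans with (add e1 f1); auto. apply mon2; auto. }
  destruct (approx S H' h2 e1) as [g [Hg [Hgi Hgs]]].
  destruct (sup_const S H' h4 g e1 w Hgi Hgs) as [Hi2 Hs2].
  destruct (Hx2a _ _ Hi2 Hs2 Hx2e) as [n Hn].
  destruct (h5 e1 zero z' (g n) zero) as (c & Hc1 & Hc2 & Hc3).
  { rewrite Hzero; auto. } { auto. } { apply wb00; auto. }
  assert (Hyc : le y (add c w)).
  { apply (wc_lemma S H' h2 h3 wc y x (add c w) x3); auto.
    rewrite (Hcomm y x). apply Htrans with (add z' w).
    exact Hle.
    apply Htrans with (add (add e1 c) w). apply Hmon; auto.
    rewrite <- Hassoc, (Hcomm (add c w) x3). apply mon2; auto. }
  assert (Hy2le : le y2 (add c w)).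
  { apply Htrans with y; auto. apply (wb_le_imp S H'); auto. }
  destruct (h6 _ _ _ _ Hy2a Hy2le) as (e2 & f2 & He2a & He2b & He2c & Hf2a & Hf2b).
  exists (g n), e2. split; [|split; [|split; [|split]]].
  - apply (le_wb S H') with z'; auto. apply Htrans with (add (g n) c); auto.
    apply mon2; auto.
  - apply (wb_le S H') with x1; auto.
  - apply (wb_le S H') with y1; auto. apply Htrans with (add e2 f2); auto. apply mon2; auto.
  - apply (le_wb S H') with x3. apply Htrans with e1; auto. apply (wb_le_imp S H'); auto.
    apply (wb_le S H') with x; auto. apply le_addr; auto.
  - apply (le_wb S H') with y2; auto. apply (wb_le S H') with y; auto. apply le_addr; auto.
Qed.
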